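(* Let $\rho\in\Delta_{|\mathcal S|}$ have all entries positive. For any non-optimal policy $\pi$, there exists a non-optimal state-action pair $(\bar s,\bar a)$ such that $\pi(\bar a\mid\bar s)>0$ and $$A^{\pi^*}(\bar s,\bar a)\ge\frac{1-\gamma}{|\mathcal S||\mathcal A|}\big[f_\rho(\pi)-f_\rho(\pi^* )\big]>0.$$
   Context: An unregularized infinite-horizon discounted MDP: finite state space $\mathcal S$, finite action space $\mathcal A$, transition probabilities $\mathcal P(s'\mid s,a)$, cost $c:\mathcal S\times\mathcal A\to\mathbb R$, discount $\gamma\in[0,1)$. A policy $\pi$ assigns $\pi(\cdot\mid s)\in\Delta_{|\mathcal A|}$ to each state. $V^\pi(s)=\mathbb E[\sum_{t\ge0}\gamma^tc(s_t,a_t)\mid s_0=s,\ a_t\sim\pi(\cdot\mid s_t),\ s_{t+1}\sim\mathcal P(\cdot\mid s_t,a_t)]$, $Q^\pi(s,a)$ the same with $a_0=a$, and $A^\pi(s,a):=Q^\pi(s,a)-V^\pi(s)$. $\pi^*$ is a fixed optimal policy ($V^{\pi^*}(s)\le V^\pi(s)$ for all $\pi,s$). For $\rho\in\Delta_{|\mathcal S|}$, $f_\rho(\pi):=\sum_s\rho(s)V^\pi(s)$. A pair $(s,a)$ is non-optimal if $\pi^*(a\mid s)=0$; a policy $\pi$ is non-optimal if $f_\rho(\pi)-f_\rho(\pi^* )>0$. *)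

(* Defs.v *)
From HB Require Import structures.
From mathcomp Require Import all_boot all_order all_algebra.
From mathcomp Require Import all_classical all_reals topology normedtype sequences.
Set Implicit Arguments. Unset Strict Implicit. Unset Printing Implicit Defensive.
Import Order.TTheory GRing.Theory Num.Theory numFieldNormedType.Exports.
Local Open Scope ring_scope.

Section MDP.
Variables (R : realType) (S A : finType).

Definition is_distr (T : finType) (p : T -> R) : Prop :=
  (forall x, 0 <= p x) /\ \sum_(x : T) p x = 1.

Definition is_kernel (P : S -> A -> S -> R) : Prop :=
  forall s a, is_distr (P s a).

Definition is_policy (pi : S -> A -> R) : Prop :=
  forall s, is_distr (pi s).

Variables (P : S -> A -> S -> R) (c : S -> A -> R) (gamma : R).

Definition cost_pi (pi : S -> A -> R) (s : S) : R :=
  \sum_(a : A) pi s a * c s a.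

Definition trans_pi (pi : S -> A -> R) (s s' : S) : R :=
  \sum_(a : A) pi s a * P s a s'.

Fixpoint state_dist (pi : S -> A -> R) (t : nat) (s s' : S) : R :=
  match t with
  | O => if s == s' then 1 else 0
  | t'.+1 => \sum_(u : S) state_dist pi t' s u * trans_pi pi u s'
  end.

Definition exp_cost (pi : S -> A -> R) (t : nat) (s : S) : R :=
  \sum_(s' : S) state_dist pi t s s' * cost_pi pi s'.

Definition exp_cost_sa (pi : S -> A -> R) (t : nat) (s : S) (a : A) : R :=
  match t with
  | O => c s a
  | t'.+1 => \sum_(s1 : S) P s a s1 * exp_cost pi t' s1
  end.

Definition V (pi : S -> A -> R) (s : S) : R :=
  limn (fun n : nat => (\sum_(0 <= t < n) gamma ^+ t * exp_cost pi t s : R)).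

Definition Q (pi : S -> A -> R) (s : S) (a : A) : R :=
  limn (fun n : nat => (\sum_(0 <= t < n) gamma ^+ t * exp_cost_sa pi t s a : R)).

Definition Adv (pi : S -> A -> R) (s : S) (a : A) : R := Q pi s a - V pi s.

Definition f_rho (rho : S -> R) (pi : S -> A -> R) : R :=
  \sum_(s : S) rho s * V pi s.

End MDP.

(* Main.v *)
Require Import Defs.
From HB Require Import structures.
From mathcomp Require Import all_boot all_order all_algebra.
From mathcomp Require Import all_classical all_reals topology normedtype sequences.
Import Order.TTheory GRing.Theory Num.Theory numFieldNormedType.Exports.
Set Implicit Arguments. Unset Strict Implicit. Unset Printing Implicit Defensive.
Local Open Scope ring_scope.
Local Open Scope classical_set_scope.

Section Aux.
Variables (R : realType) (S A : finType).
Variables (P : S -> A -> S -> R) (c : S -> A -> R) (gamma : R).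
Hypothesis hP : is_kernel P.
Hypothesis hg0 : 0 <= gamma.
Hypothesis hg1 : gamma < 1.

Lemma pol_le1 (pi : S -> A -> R) : is_policy pi -> forall s a, pi s a <= 1.
Proof.
move=> hpi s a; case: (hpi s) => h0 h1; rewrite -h1 (bigD1 a) //= lerDl.
by apply: sumr_ge0 => i _.
Qed.

Lemma trans_ge0 pi : is_policy pi -> forall s u, 0 <= trans_pi P pi s u.
Proof.
move=> hpi s u; apply: sumr_ge0 => a _; apply: mulr_ge0; first by case: (hpi s).
by case: (hP s a).
Qed.

Lemma trans_sum1 pi : is_policy pi -> forall s, \sum_u trans_pi P pi s u = 1.
Proof.
move=> hpi s; rewrite /trans_pi exchange_big /=.
rewrite -(proj2 (hpi s)); apply: eq_bigr => a _.
by rewrite -mulr_sumr (proj2 (hP s a)) mulr1.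
Qed.

Lemma sd_ge0 pi : is_policy pi -> forall t s s', 0 <= state_dist P pi t s s'.
Proof.
move=> hpi; elim=> [|t IH] s s' /=; first by case: (s == s').
apply: sumr_ge0 => u _; apply: mulr_ge0 => //; exact: trans_ge0.
Qed.

Lemma sd_sum1 pi : is_policy pi -> forall t s, \sum_s' state_dist P pi t s s' = 1.
Proof.
move=> hpi; elim=> [|t IH] s /=.
  by rewrite (bigD1 s) //= eqxx big1 ?addr0 // => i /negbTE; rewrite eq_sym => ->.
rewrite exchange_big /= -(IH s); apply: eq_bigr => u _.
by rewrite -mulr_sumr trans_sum1 // mulr1.
Qed.

Lemma sd_first pi : forall t s s', state_dist P pi t.+1 s s' =
  \sum_u trans_pi P pi s u * state_dist P pi t u s'.
Proof.
elim=> [|t IH] s s'.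
  rewrite /= (bigD1 s) //= eqxx mul1r big1 ?addr0; last first.
    by move=> i /negbTE; rewrite eq_sym => ->; rewrite mul0r.
  rewrite (bigD1 s') //= eqxx mulr1 big1 ?addr0 // => i /negbTE ->; by rewrite mulr0.
have -> : state_dist P pi t.+2 s s' = \sum_u state_dist P pi t.+1 s u * trans_pi P pi u s' by [].
under eq_bigr => u _ do rewrite IH mulr_suml.
rewrite exchange_big /=; apply: eq_bigr => w _.
by rewrite /= mulr_sumr; apply: eq_bigr => u _; rewrite mulrA.
Qed.

Lemma exp_cost_S pi t s : exp_cost P c pi t.+1 s =
  \sum_u trans_pi P pi s u * exp_cost P c pi t u.
Proof.
rewrite /exp_cost; under eq_bigr => s' _ do rewrite sd_first mulr_suml.
rewrite exchange_big /=; apply: eq_bigr => u _.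
by rewrite mulr_sumr; apply: eq_bigr => s' _; rewrite mulrA.
Qed.

Lemma exp_cost_0 pi s : exp_cost P c pi 0 s = cost_pi c pi s.
Proof.
rewrite /exp_cost /= (bigD1 s) //= eqxx mul1r big1 ?addr0 //.
by move=> i /negbTE; rewrite eq_sym => ->; rewrite mul0r.
Qed.

Definition Cb := \sum_s \sum_a `|c s a|.

Lemma exp_cost_bnd pi : is_policy pi -> forall t s, `|exp_cost P c pi t s| <= Cb.
Proof.
move=> hpi t s.
have hc : forall s', `|cost_pi c pi s'| <= Cb.
  move=> s'; apply: (le_trans (ler_norm_sum _ _ _)).
  apply: (@le_trans _ _ (\sum_a `|c s' a|)).
    apply: ler_sum => a _; rewrite normrM (ger0_norm (proj1 (hpi s') a)).
    by rewrite ler_piMl // pol_le1.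
  rewrite /Cb (bigD1 s') //= lerDl; apply: sumr_ge0 => i _; apply: sumr_ge0 => *.
  exact: normr_ge0.
apply: (le_trans (ler_norm_sum _ _ _)).
apply: (@le_trans _ _ (\sum_s' state_dist P pi t s s' * Cb)).
  apply: ler_sum => s' _; rewrite normrM ger0_norm ?sd_ge0 //.
  by apply: ler_wpM2l => //; apply: sd_ge0.
by rewrite -mulr_suml sd_sum1 // mul1r.
Qed.


Lemma cvg_sumS (F : S -> nat -> R) (L : S -> R) :
  (forall u, F u @ \oo --> L u) -> (fun n => \sum_u F u n) @ \oo --> \sum_u L u.
Proof.
move=> h; rewrite /index_enum; elim: (Finite.enum S) => [|x r IH].
  by rewrite big_nil; under eq_fun do rewrite big_nil; exact: cvg_cst.
rewrite big_cons; under eq_fun do rewrite big_cons.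
exact: cvgD.
Qed.

Lemma cvg_scal (k : R) (f : nat -> R) l : f @ \oo --> l -> (fun n => k * f n) @ \oo --> k * l.
Proof. move=> h; exact: (cvgM (cvg_cst k) h). Qed.

Lemma Scvg pi : is_policy pi -> forall s,
  cvgn (fun n => \sum_(0 <= t < n) gamma ^+ t * exp_cost P c pi t s).
Proof.
move=> hpi s.
have -> : (fun n => \sum_(0 <= t < n) gamma ^+ t * exp_cost P c pi t s) =
  series (fun t => gamma ^+ t * exp_cost P c pi t s) by [].
apply: normed_cvg.
have Cb0 : 0 <= Cb by apply: le_trans (exp_cost_bnd hpi 0 s); exact: normr_ge0.
apply: (@series_le_cvg _ _ (geometric Cb gamma)).
- by move=> n; exact: normr_ge0.
- by move=> n /=; apply: mulr_ge0 => //; exact: exprn_ge0.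
- move=> n /=; rewrite normrM ger0_norm ?exprn_ge0 // mulrC.
  by apply: ler_wpM2r; [exact: exprn_ge0 | exact: exp_cost_bnd].
- by apply: is_cvg_geometric_series; rewrite ger0_norm.
Qed.

Lemma V_bell pi : is_policy pi -> forall s, V P c gamma pi s =
  cost_pi c pi s + gamma * \sum_u trans_pi P pi s u * V P c gamma pi u.
Proof.
move=> hpi s.
pose Sn u n := \sum_(0 <= t < n) gamma ^+ t * exp_cost P c pi t u.
have eq : forall n, Sn s n.+1 = cost_pi c pi s + gamma * \sum_u trans_pi P pi s u * Sn u n.
  move=> n; rewrite /Sn big_nat_recl // expr0 mul1r exp_cost_0; congr (_ + _).
  under eq_bigr => t _ do rewrite exp_cost_S exprS -mulrA mulr_sumr.
  rewrite -mulr_sumr; congr (_ * _); rewrite exchange_big /=.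
  apply: eq_bigr => u _; rewrite mulr_sumr; apply: eq_bigr => t _.
  by rewrite mulrCA.
rewrite /V; apply: cvg_lim; first exact: Rhausdorff.
rewrite -(cvg_shiftS (fun n => \sum_(0 <= t < n) gamma ^+ t * exp_cost P c pi t s)) /=.
have -> : (fun n => \sum_(0 <= t < n.+1) gamma ^+ t * exp_cost P c pi t s) = 
  (fun n => cost_pi c pi s + gamma * \sum_u trans_pi P pi s u * Sn u n).
  by apply: funext => n; rewrite -eq.
apply: cvgD; first exact: cvg_cst.
apply: cvg_scal; apply: cvg_sumS => u; apply: cvg_scal.
exact: (@Scvg pi hpi u).
Qed.

Lemma Q_bell pi : is_policy pi -> forall s a, Q P c gamma pi s a =
  c s a + gamma * \sum_u P s a u * V P c gamma pi u.
Proof.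
move=> hpi s a.
pose Sn u n := \sum_(0 <= t < n) gamma ^+ t * exp_cost P c pi t u.
rewrite /Q; apply: cvg_lim; first exact: Rhausdorff.
rewrite -(cvg_shiftS (fun n => \sum_(0 <= t < n) gamma ^+ t * exp_cost_sa P c pi t s a)) /=.
have -> : (fun n => \sum_(0 <= t < n.+1) gamma ^+ t * exp_cost_sa P c pi t s a) = 
  (fun n => c s a + gamma * \sum_u P s a u * Sn u n).
  apply: funext => n; rewrite /Sn big_nat_recl // expr0 mul1r /=; congr (_ + _).
  under eq_bigr => t _ do rewrite exprS -mulrA mulr_sumr.
  rewrite -mulr_sumr; congr (_ * _); rewrite exchange_big /=.
  apply: eq_bigr => u _; rewrite mulr_sumr; apply: eq_bigr => t _.
  by rewrite mulrCA.
apply: cvgD; first exact: cvg_cst.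
apply: cvg_scal; apply: cvg_sumS => u; apply: cvg_scal.
exact: (@Scvg pi hpi u).
Qed.


Lemma ex_max (T : finType) (F : T -> R) (x : T) : exists y, forall z, F z <= F y.
Proof. case: (@arg_maxP _ _ _ x predT F) => // y _ H; exists y => z; exact: H. Qed.

Lemma fin_bound (D g : S -> R) (T : S -> S -> R) (G : R) :
  (forall s u, 0 <= T s u) -> (forall s, \sum_u T s u = 1) ->
  (forall s, D s = g s + gamma * \sum_u T s u * D u) ->
  (forall s, g s <= G) -> forall s, (1 - gamma) * D s <= G.
Proof.
move=> T0 T1 HD Hg s.
case: (ex_max D s) => s1 Hs1.
have h1 : \sum_u T s1 u * D u <= D s1.
  apply: (@le_trans _ _ (\sum_u T s1 u * D s1)).
    by apply: ler_sum => u _; apply: ler_wpM2l.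
  by rewrite -mulr_suml T1 mul1r.
have h2 : (1 - gamma) * D s1 <= G.
  rewrite mulrBl mul1r lerBlDr {1}HD; apply: lerD => //.
  by apply: ler_wpM2l.
apply: le_trans h2; apply: ler_wpM2l => //; by rewrite subr_ge0 ltW.
Qed.

End Aux.

Unset Implicit Arguments.
Local Close Scope classical_set_scope.
From mathcomp Require Import lra.
Theorem lemma3p7 (R : realType) (S A : finType)
  (P : S -> A -> S -> R) (c : S -> A -> R) (gamma : R)
  (hP : is_kernel P) (hg0 : 0 <= gamma) (hg1 : gamma < 1)
  (pistar : S -> A -> R) (hpistar : is_policy pistar)
  (hopt : forall (pi : S -> A -> R), is_policy pi ->
            forall s, V P c gamma pistar s <= V P c gamma pi s)
  (rho : S -> R) (hrho : is_distr rho) (hrho_pos : forall s, 0 < rho s)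
  (pi : S -> A -> R) (hpi : is_policy pi)
  (hnonopt : 0 < f_rho P c gamma rho pi - f_rho P c gamma rho pistar) :
  exists (sb : S) (ab : A),
    pistar sb ab = 0 /\ 0 < pi sb ab /\
    (1 - gamma) / (#|S|%:R * #|A|%:R)
      * (f_rho P c gamma rho pi - f_rho P c gamma rho pistar)
      <= Adv P c gamma pistar sb ab /\
    0 < (1 - gamma) / (#|S|%:R * #|A|%:R)
      * (f_rho P c gamma rho pi - f_rho P c gamma rho pistar).
Proof.
set Vs := V P c gamma pistar.
set Ad := Adv P c gamma pistar.
have g1 : 0 < 1 - gamma by rewrite subr_gt0.
have GI : forall p, is_policy p -> forall u, V P c gamma p u - Vs u =
   \sum_a p u a * Ad u a + gamma * \sum_w trans_pi P p u w * (V P c gamma p w - Vs w).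
  move=> p hp u.
  have e1 : \sum_a p u a * Ad u a =
      cost_pi c p u + gamma * \sum_w trans_pi P p u w * Vs w - Vs u.
    rewrite /Ad /Adv; under eq_bigr do rewrite mulrBr.
    rewrite sumrB -mulr_suml (proj2 (hp u)) mul1r; congr (_ - _).
    under eq_bigr do rewrite (Q_bell c hP hg0 hg1 hpistar) mulrDr.
    rewrite big_split /=; congr (_ + _).
    rewrite /trans_pi; under [in RHS]eq_bigr => w _ do rewrite mulr_suml.
    rewrite exchange_big mulr_sumr; apply: eq_bigr => a _.
    rewrite mulrCA; congr (_ * _); rewrite mulr_sumr; apply: eq_bigr => w _; by rewrite mulrA.
  rewrite e1 {1}(V_bell c hP hg0 hg1 hp u).
  under [X in _ = _ + gamma * X]eq_bigr do rewrite mulrBr.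
  rewrite sumrB; lra.
have F1 : forall u, \sum_a pistar u a * Ad u a = 0.
  move=> u; have := GI _ hpistar u; rewrite /Vs subrr.
  rewrite [X in gamma * X]big1 ?mulr0 ?addr0 => [/esym //|w _]; by rewrite subrr mulr0.
have F2 : forall s a, 0 <= Ad s a.
  move=> s0 a0; rewrite leNgt; apply/negP => Hneg.
  pose p s a := if s == s0 then (if a == a0 then 1 else 0) else pistar s a : R.
  have hp : is_policy p.
    move=> s; rewrite /p; case: eqP => _; last exact: hpistar.
    split; first by move=> a; case: eqP.
    by rewrite (bigD1 a0) //= eqxx big1 ?addr0 // => a /negbTE ->.
  have hg : forall u, \sum_a p u a * Ad u a <= 0.
    move=> u; rewrite /p; case: eqP => [->|_]; last by rewrite F1.
    rewrite (bigD1 a0) //= eqxx mul1r big1 ?addr0; first exact: ltW.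
    by move=> a /negbTE ->; rewrite mul0r.
  have hD := fin_bound hg0 hg1 (trans_ge0 hP hp) (trans_sum1 hP hp) (GI p hp) hg.
  have Dle : forall u, V P c gamma p u - Vs u <= 0.
    by move=> u; have := hD u; rewrite pmulr_rle0.
  have := GI p hp s0.
  have hs0 : \sum_a p s0 a * Ad s0 a = Ad s0 a0.
    rewrite /p eqxx (bigD1 a0) //= eqxx mul1r big1 ?addr0 //.
    by move=> a /negbTE ->; rewrite mul0r.
  rewrite hs0 => HH.
  have : gamma * \sum_w trans_pi P p s0 w * (V P c gamma p w - Vs w) <= 0.
    apply: mulr_ge0_le0 => //; apply: sumr_le0 => w _.
    apply: mulr_ge0_le0; [exact: trans_ge0 | exact: Dle].
  have := hopt p hp s0; rewrite -/Vs. lra.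
have [s0 _] : exists s0 : S, True.
  have : (0 < #|S|)%N.
    rewrite lt0n; apply/negP => /eqP /card0_eq h0; move: (proj2 hrho).
    rewrite big_pred0; last by move=> x; have := h0 x.
    by move=> /esym /eqP; rewrite oner_eq0.
  by case/card_gt0P => x _; exists x.
have [a0 _] : exists a0 : A, True.
  have : (0 < #|A|)%N.
    rewrite lt0n; apply/negP => /eqP /card0_eq h0; move: (proj2 (hpi s0)).
    rewrite big_pred0; last by move=> x; have := h0 x.
    by move=> /esym /eqP; rewrite oner_eq0.
  by case/card_gt0P => x _; exists x.
case: (ex_max (fun q : S * A => pi q.1 q.2 * Ad q.1 q.2) (s0, a0)) => [[sb ab]] /= Hmax.
set hb := pi sb ab * Ad sb ab.
have hg : forall u, \sum_a pi u a * Ad u a <= #|A|%:R * hb.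
  move=> u; apply: (@le_trans _ _ (\sum_(a : A) hb)).
    by apply: ler_sum => a _; exact: (Hmax (u, a)).
  by rewrite sumr_const mulr_natl.
have hD := fin_bound hg0 hg1 (trans_ge0 hP hpi) (trans_sum1 hP hpi) (GI pi hpi) hg.
set Del := f_rho P c gamma rho pi - f_rho P c gamma rho pistar.
have hDel : (1 - gamma) * Del <= #|A|%:R * hb.
  rewrite /Del /f_rho -sumrB.
  under eq_bigr do rewrite -mulrBr.
  rewrite mulr_sumr.
  apply: (@le_trans _ _ (\sum_s rho s * (#|A|%:R * hb))).
    apply: ler_sum => s _; rewrite mulrCA; apply: ler_wpM2l.
      exact: ltW.
    exact: hD.
  by rewrite -mulr_suml (proj2 hrho) mul1r.
have hbpos : 0 < hb.
  rewrite ltNge; apply/negP => hle.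
  have : (1 - gamma) * Del <= 0.
    apply: le_trans hDel _; apply: mulr_ge0_le0 => //.
  rewrite pmulr_rle0 // => h; move: hnonopt; rewrite -/Del; lra.
have piab0 : 0 <= pi sb ab by case: (hpi sb).
have Adab0 := F2 sb ab.
have pipos : 0 < pi sb ab.
  rewrite lt_def piab0 andbT; apply: contraTneq hbpos => h.
  by rewrite /hb h mul0r ltxx.
have Adpos : 0 < Ad sb ab.
  rewrite lt_def Adab0 andbT; apply: contraTneq hbpos => h.
  by rewrite /hb h mulr0 ltxx.
have hSpos : (0 < #|S|)%N by apply/card_gt0P; exists sb.
have hApos : (0 < #|A|)%N by apply/card_gt0P; exists ab.
have hS1 : 1 <= #|S|%:R :> R by rewrite ler1n.
have hA1 : 1 <= #|A|%:R :> R by rewrite ler1n.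
have pile1 := pol_le1 hpi sb ab.
exists sb, ab; split; last split; last split.
- have := F1 sb; move/eqP; rewrite psumr_eq0; last first.
    by move=> a _; apply: mulr_ge0; [case: (hpistar sb) | exact: F2].
  move/allP => /(_ ab (mem_index_enum _)) /=; rewrite mulf_eq0 => /orP [/eqP //|].
  by rewrite (gt_eqF Adpos).
- exact: pipos.
- have hN : 0 < #|S|%:R * #|A|%:R :> R by apply: mulr_gt0; lra.
  rewrite mulrAC ler_pdivrMr //.
  apply: le_trans hDel _.
  have h1 : hb <= Ad sb ab by rewrite /hb ler_piMl.
  apply: (@le_trans _ _ (#|A|%:R * Ad sb ab)); first by apply: ler_wpM2l.
  rewrite [Ad sb ab * _]mulrC -mulrA; apply: ler_peMl => //; apply: mulr_ge0 => //; lra.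
- have hN : 0 < #|S|%:R * #|A|%:R :> R by apply: mulr_gt0; lra.
  apply: mulr_gt0; last exact: hnonopt.
  by apply: divr_gt0.
Qed.
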